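(* Fix a positive integer $m$ and positive reals $r_1,\dots,r_m$, and let $r=\max_jr_j$. Then for every $\varepsilon>0$ there exist $\vec\mu\in\mathbb{R}^m_{>0}$ and $\vec\sigma\in\mathbb{R}^m_{\ge0}$ with $\sigma_j/\mu_j=r_j$ for all $j$, such that for every truthful mechanism $A$ there is a product distribution $F=F_1\times\cdots\times F_m$, with each $F_j$ having mean $\mu_j$ and standard deviation at most $\sigma_j$, satisfying \[\frac{\mathrm{OPT}(F)}{\mathrm{REV}(A;F)}\ge 1-\varepsilon+\ln(1+r^2).\] In particular $\mathrm{APX}(\vec\mu,\vec\sigma)\ge1-\varepsilon+\ln(1+r^2)$.
   Context: One buyer with additive valuation for $m$ items with values $\vec v=(v_1,\dots,v_m)\sim F$ on $\mathbb{R}^m_{\ge0}$. $\mathbb{F}_{\vec\mu,\vec\sigma}$ is the class of joint distributions whose $j$-th marginal has mean $\mu_j$ and standard deviation at most $\sigma_j$. A mechanism is a pair $(x,\pi)$ with $x:\mathbb{R}^m_{\ge0}\to[0,1]^m$, $\pi:\mathbb{R}^m_{\ge0}\to\mathbb{R}_{\ge0}$; it is truthful if $x(\vec v)\cdot\vec v-\pi(\vec v)\ge x(\vec w)\cdot\vec v-\pi(\vec w)$ and $x(\vec v)\cdot\vec v-\pi(\vec v)\ge0$ for all $\vec v,\vec w$. $\mathrm{REV}(A;F)=\mathbb{E}_{\vec v\sim F}[\pi(\vec v)]$, $\mathrm{OPT}(F)$ is the supremum of $\mathrm{REV}$ over truthful mechanisms, and $\mathrm{APX}(\vec\mu,\vec\sigma)=\inf_A\sup_{F\in\mathbb{F}_{\vec\mu,\vec\sigma}}\mathrm{OPT}(F)/\mathrm{REV}(A;F)$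 over truthful $A$ (zero denominators give $+\infty$). *)

(* Defs.v *)
From HB Require Import structures.
From mathcomp Require Import all_boot all_order all_algebra.
From mathcomp Require Import all_classical all_reals all_analysis.
Set Implicit Arguments. Unset Strict Implicit. Unset Printing Implicit Defensive.
Import Order.TTheory GRing.Theory Num.Theory.
Local Open Scope classical_set_scope.
Local Open Scope ring_scope.

(* Valuation vectors are m-tuples of reals, with the product sigma-algebra. *)
Definition nonneg_vec (R : realType) (m : nat) (v : m.-tuple R) : Prop :=
  forall j : 'I_m, 0 <= tnth v j.

Definition mechanism (R : realType) (m : nat) : Type :=
  ((m.-tuple R -> 'I_m -> R) * (m.-tuple R -> R))%type.

Definition alloc (R : realType) (m : nat) (A : mechanism R m) := A.1.
Definition pay (R : realType) (m : nat) (A : mechanism R m) := A.2.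

Definition utility (R : realType) (m : nat) (A : mechanism R m)
  (v w : m.-tuple R) : R :=
  \sum_(j < m) alloc A w j * tnth v j - pay A w.

(* Truthful mechanism on R^m_{>=0}: x maps into [0,1]^m, pi into R_{>=0},
   incentive compatible and individually rational; the payment rule is
   required to be (Borel) measurable so that REV is an expectation. *)
Definition truthful (R : realType) (m : nat) (A : mechanism R m) : Prop :=
  [/\ (forall v, nonneg_vec v -> forall j, 0 <= alloc A v j <= 1),
      (forall v, nonneg_vec v -> 0 <= pay A v),
      (forall v w, nonneg_vec v -> nonneg_vec w -> utility A v w <= utility A v v),
      (forall v, nonneg_vec v -> 0 <= utility A v v) &
      measurable_fun [set: m.-tuple R] (pay A)].

Local Open Scope ereal_scope.

Definition REV (R : realType) (m : nat) (A : mechanism R m)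
  (F : probability (m.-tuple R) R) : \bar R :=
  \int[F]_v (pay A v)%:E.

Definition OPT (R : realType) (m : nat) (F : probability (m.-tuple R) R) : \bar R :=
  ereal_sup [set REV A F | A in [set A : mechanism R m | truthful A]].

Definition eratio (R : realType) (a b : \bar R) : \bar R :=
  if b == 0 then +oo else a * ((fine b)^-1)%:E.

Definition in_class (R : realType) (m : nat) (mu sigma : 'I_m -> R)
  (F : probability (m.-tuple R) R) : Prop :=
  F [set v | nonneg_vec v] = 1 /\
  forall j : 'I_m,
    \int[F]_v (tnth v j)%:E = (mu j)%:E /\
    \int[F]_v ((tnth v j - mu j) ^+ 2)%:E <= (sigma j ^+ 2)%:E.

Definition marginal_ok (R : realType) (mu sigma : R) (G : probability R R) : Prop :=
  [/\ G [set x | (0 <= x)%R] = 1,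
      \int[G]_x x%:E = mu%:E &
      \int[G]_x ((x - mu) ^+ 2)%:E <= (sigma ^+ 2)%:E].

Definition is_product (R : realType) (m : nat)
  (F : probability (m.-tuple R) R) (Fs : 'I_m -> probability R R) : Prop :=
  forall B : 'I_m -> set R, (forall j, measurable (B j)) ->
    F [set v | forall j, B j (tnth v j)] = \prod_(j < m) Fs j (B j).

Definition APX (R : realType) (m : nat) (mu sigma : 'I_m -> R) : \bar R :=
  ereal_inf [set ereal_sup [set eratio (OPT F) (REV A F) |
                              F in [set F | in_class mu sigma F]]
            | A in [set A : mechanism R m | truthful A]].

(* Main.v *)
Require Import Defs.
From HB Require Import structures.
From mathcomp Require Import all_boot all_order all_algebra.
From mathcomp Require Import all_classical all_reals all_analysis.
From mathcomp Require Import measurable_realfun.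
From mathcomp Require Import ring lra.
Import Order.TTheory GRing.Theory Num.Theory.
Local Open Scope classical_set_scope.
Local Open Scope ring_scope.
Set Implicit Arguments. Unset Strict Implicit.
Definition mixf (T : Type) (a b : T) : bool -> T := fun x => if x then a else b.

Lemma mixf_mfun d (T : measurableType d) (a b : T) :
  measurable_fun [set: bool] (mixf a b).
Proof. by move=> _ Y _; exact: I. Qed.

HB.instance Definition _ d (T : measurableType d) (a b : T) :=
  isMeasurableFun.Build _ _ bool T (mixf a b) (mixf_mfun a b).

Definition mixP (R : realType) d (T : measurableType d) (q : R) (a b : T) :
  probability T R := distribution (bernoulli_prob q) (mixf a b).

Lemma mixP_set (R : realType) d (T : measurableType d) (q : R) (a b : T) S :
  mixP q a b S = bernoulli_prob q (mixf a b @^-1` S).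
Proof. by []. Qed.

Lemma int_mixP (R : realType) d (T : measurableType d) (q : R) (a b : T)
  (q01 : 0 <= q <= 1) (h : T -> R) : measurable_fun [set: T] h ->
  (\int[mixP q a b]_v (h v)%:E = (q * h a + (1 - q) * h b)%:E)%E.
Proof.
move=> mh.
rewrite integralE funerpos funerneg.
have mE : forall g : T -> R, measurable_fun [set: T] g ->
   measurable_fun [set: T] (EFin \o g : T -> \bar R).
  by move=> g mg; exact: measurableT_comp.
rewrite /mixP !ge0_integral_pushforward //; 
  try (by move=> y _; rewrite /= lee_fin; apply: funrneg_ge0);
  try (by move=> y _; rewrite /= lee_fin; apply: funrpos_ge0);
  try (by apply: mE; apply: measurable_funrneg);
  try (by apply: mE; apply: measurable_funrpos);
  try exact: mixf_mfun.
rewrite preimage_setT !integral_bernoulli_prob //=;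
  try (by move=> x; rewrite /= lee_fin; apply: funrneg_ge0);
  try (by move=> x; rewrite /= lee_fin; apply: funrpos_ge0).
rewrite -!EFinM -!EFinD; congr EFin.
have H : forall x, h x = h^\+ x - h^\- x.
  by move=> x; rewrite -[in LHS](funrposBneg h).
rewrite (H a) (H b) /unstable.onem; ring.
Qed.
Lemma core (R : realType) (u P X : R -> R) (D c rho eps : R) (n : nat) :
  0 < rho -> 0 < eps -> 0 < c -> 0 <= D -> (0 < n)%N ->
  2 * c * D * (1 + rho^+2) <= eps/2 ->
  rho^+4 / n%:R <= eps/2 ->
  c <= 1 - eps + ln (1 + rho^+2) ->
  (forall s s', 0 <= s -> 0 <= s' -> u s + X s * (s' - s) <= u s') ->
  (forall s, 0 <= s -> 0 <= u s) ->
  (forall s, 0 <= s -> u s + P s - D <= X s * s) ->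
  (forall s, 0 <= s -> u s <= s + D - P s) ->
  exists i, (i <= n)%N /\
    P (1 + i%:R * (rho^+2 / n%:R)) <= (c^-1 - D) * (1 + i%:R * (rho^+2/n%:R)).
Proof.
move=> rho0 eps0 c0 D0 n0 hD hn hc IC IR h1 h2.
set Dl := rho^+2 / n%:R.
have nR : 0 < n%:R :> R by rewrite ltr0n.
have Dl0 : 0 < Dl by rewrite divr_gt0 // exprn_gt0.
set t := fun i : nat => 1 + i%:R * Dl.
have t1 : forall i, 1 <= t i.
  by move=> i; rewrite /t lerDl mulr_ge0 // ltW.
have t0 : forall i, 0 < t i by move=> i; apply: lt_le_trans (t1 i).
have tS : forall i, t i.+1 = t i + Dl by move=> i; rewrite /t -addn1 natrD; ring.
have tn : t n = 1 + rho^+2.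
  by rewrite /t /Dl mulrC -mulrA mulVf ?mulr1 // gt_eqF.
set a := c^-1 - D.
have [[i [hi hP]]|Hno] := pselect (exists i, (i <= n)%N /\ P (t i) <= a * t i).
  by exists i.
have Hgt : forall i, (i <= n)%N -> a * t i < P (t i).
  move=> i hi; rewrite ltNge; apply/negP => hP; apply: Hno; by exists i.
set S := fun i : nat => \sum_(j < i) Dl / t j.+1.
have SS : forall i, S i.+1 = S i + Dl / t i.+1 by move=> i; rewrite /S big_ord_recr.
set b := c^-1 - 2 * D.
have C1 : forall i, (i <= n)%N -> b * S i <= u (t i) / t i.
  elim=> [|i IH] hi.
    rewrite /S big_ord0 mulr0 divr_ge0 //; last exact: ltW.
    by apply: IR; exact: ltW.
  have hi' : (i <= n)%N by apply: leq_trans hi.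
  have IHi := IH hi'.
  have ti0 := t0 i; have ti1 := t0 i.+1.
  have hX : u (t i) + a * t i - D < X (t i) * t i.
    by apply: lt_le_trans (h1 _ (ltW ti0)); rewrite ltrD2r ltrD2l Hgt.
  have hX2 : u (t i) / t i + b <= X (t i).
    rewrite -(ler_pM2r ti0) mulrDl mulfVK ?gt_eqF //.
    apply: le_trans (ltW hX).
    rewrite /b /a; have := t1 i; nra.
  have hIC := IC (t i) (t i.+1) (ltW ti0) (ltW ti1).
  rewrite tS addrAC subrr add0r -tS in hIC.
  rewrite SS ler_pdivlMr //.
  set w := u (t i) / t i.
  have uw : u (t i) = w * t i by rewrite /w mulfVK ?gt_eqF.
  have E : b * (S i + Dl / t i.+1) * t i.+1 = b * S i * t i.+1 + b * Dl.
    by field; rewrite gt_eqF.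
  rewrite E; apply: le_trans hIC.
  have E1 : b * S i * t i.+1 <= w * t i.+1 by rewrite ler_pM2r.
  have E2 : (w + b) * Dl <= X (t i) * Dl by rewrite ler_pM2r.
  rewrite uw; rewrite tS in E1 *.
  have E3 : w * (t i + Dl) + b * Dl = w * t i + (w + b) * Dl by ring.
  apply: le_trans (_ : w * (t i + Dl) + b * Dl <= _); first by rewrite lerD2r.
  by rewrite E3 lerD2l.
have C2 : forall i, ln (t i) - i%:R * Dl^+2 <= S i.
  elim=> [|i IH].
    by rewrite /S big_ord0 /t mul0r addr0 ln1 mul0r subr0.
  rewrite SS.
  have ti0 := t0 i; have ti1 := t0 i.+1.
  have L1 : ln (t i.+1) <= ln (t i) + Dl / t i.
    have -> : t i.+1 = t i * (1 + Dl / t i) by rewrite tS; field; rewrite gt_eqF.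
    rewrite lnM; last 2 first.
    - by rewrite posrE.
    - by rewrite posrE; apply: addr_gt0 => //; rewrite divr_gt0.
    rewrite lerD2l; apply: le_ln1Dx.
    have : 0 <= Dl / t i by rewrite divr_ge0 // ltW.
    lra.
  have L2 : Dl / t i - Dl^+2 <= Dl / t i.+1.
    have E : Dl / t i - Dl / t i.+1 = Dl^+2 / (t i * t i.+1).
      by rewrite tS; field; rewrite !gt_eqF // -tS.
    have : Dl^+2 / (t i * t i.+1) <= Dl^+2.
      rewrite ler_pdivrMr ?mulr_gt0 //.
      rewrite ler_peMr ?exprn_ge0 ?ltW //.
      have := t1 i; rewrite tS; nra.
    rewrite -E; lra.
  have E : (i.+1)%:R * Dl^+2 = i%:R * Dl^+2 + Dl^+2.
    by rewrite -addn1 natrD mulrDl mul1r.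
  rewrite E; lra.
have C3 : forall i, S i <= i%:R * Dl.
  elim=> [|i IH]; first by rewrite /S big_ord0 mul0r.
  have E : (i.+1)%:R * Dl = i%:R * Dl + Dl by rewrite -addn1 natrD mulrDl mul1r.
  rewrite SS E lerD //.
  rewrite ler_pdivrMr ?t0 // ler_peMr ?ltW // tS; have := t1 i; lra.
have Hn := C1 n (leqnn n).
have Pn := Hgt n (leqnn n).
have un := h2 _ (ltW (t0 n)).
have C2n := C2 n. have C3n := C3 n.
rewrite tn in Hn Pn un C2n.
have eD : n%:R * Dl = rho^+2 by rewrite /Dl mulrC -mulrA mulVf ?mulr1 // gt_eqF.
have eD2 : n%:R * Dl^+2 = rho^+4 / n%:R.
  by rewrite /Dl; field; rewrite gt_eqF.
rewrite eD in C3n; rewrite eD2 in C2n.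
set T := 1 + rho^+2 in Hn Pn un C2n.
have T1 : 1 <= T by rewrite /T lerDl exprn_ge0 // ltW.
have T0 : 0 < T by lra.
set L := ln T in hc C2n.
set Sn := S n in Hn C2n C3n.
have W : u T / T < 1 + D - a.
  rewrite ltr_pdivrMr // mulrBl !mulrDl mul1r.
  have : D <= D * T by rewrite ler_peMr.
  have Pn2 : c^-1 * T - D * T < P T by rewrite -mulrBl.
  lra.
have K : b * Sn < 1 + 2 * D - c^-1 by move: (le_lt_trans Hn W); rewrite /a /b; lra.
have K2 : (1 - 2 * c * D) * Sn < c + 2 * c * D - 1.
  have K' : c * (b * Sn) < c * (1 + 2 * D - c^-1) by rewrite ltr_pM2l.
  have E1 : c * (b * Sn) = (1 - 2 * c * D) * Sn.
    by rewrite /b; field; rewrite gt_eqF.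
  have E2 : c * (1 + 2 * D - c^-1) = c + 2 * c * D - 1.
    by field; rewrite gt_eqF.
  by rewrite -E1 -E2.
have K3 : 2 * c * D * (1 + Sn) <= eps / 2.
  apply: le_trans hD; apply: ler_wpM2l; last by rewrite lerD2l.
  by rewrite mulr_ge0 // mulr_ge0 // ltW.
nra.
Qed.
Lemma sum_vec (R : realType) m (k : 'I_m) (f : 'I_m -> R) (v : m.-tuple R) s dl :
  (forall j, tnth v j = if j == k then s else dl) ->
  \sum_(j < m) f j * tnth v j = f k * s + \sum_(j < m | j != k) f j * dl.
Proof.
move=> hv; rewrite (bigD1 k) //= hv eqxx; congr (_ + _).
by apply: eq_bigr => j /negPf hj; rewrite hv hj.
Qed.

Definition posted (R : realType) m (k : 'I_m) (t : R) : mechanism R m :=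
  (fun v j => if j == k then (if t <= tnth v k then 1 else 0) else 0,
   fun v => if t <= tnth v k then t else 0).

Lemma posted_util (R : realType) m (k : 'I_m) (t : R) v w :
  utility (posted k t) v w = if t <= tnth w k then tnth v k - t else 0.
Proof.
rewrite /utility /alloc /pay /= (bigD1 k) //= eqxx big1 ?addr0.
  by case: ifP => _; rewrite ?mul1r ?mul0r ?subr0.
by move=> j /negPf ->; rewrite mul0r.
Qed.

Lemma posted_truthful (R : realType) m (k : 'I_m) (t : R) :
  0 <= t -> truthful (posted k t).
Proof.
move=> t0; split.
- move=> v _ j; rewrite /alloc /=.
  by case: ifP => _; [case: ifP => _|]; rewrite ?ler01 ?lexx.
- by move=> v _; rewrite /pay /=; case: ifP.
- move=> v w _ _; rewrite !posted_util.
  case: ifP => hw; case: ifP => hv //; rewrite ?lexx ?subr_ge0 //.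
  by rewrite subr_le0 ltW // ltNge hv.
- by move=> v _; rewrite posted_util; case: ifP => h; rewrite ?subr_ge0.
- rewrite /pay /=; apply: measurable_fun_ifT.
  + apply: measurable_fun_ler => //; exact: measurable_tnth.
  + exact: measurable_cst.
  + exact: measurable_cst.
Qed.

Lemma mix_product (R : realType) m (k : 'I_m) (q : R) (a b : m.-tuple R) :
  (forall j, j != k -> tnth a j = tnth b j) ->
  is_product (mixP q a b) (fun j => mixP q (tnth a j) (tnth b j)).
Proof.
move=> hab B mB; rewrite mixP_set.
case: (pselect (exists j, j != k /\ ~ B j (tnth a j))) => [[j [hjk hBj]]|hall].
  rewrite (_ : _ @^-1` _ = set0); last first.
    apply/seteqP; split => // -[] /= H; apply: hBj; first exact: H.
    by rewrite hab //; exact: H.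
  rewrite measure0 (bigD1 j) // mixP_set.
  rewrite (_ : _ @^-1` _ = set0); first by rewrite measure0 /= mul0e.
  by apply/seteqP; split => // -[] /= H; apply: hBj; rewrite // hab.
have hall' : forall j, j != k -> B j (tnth a j).
  move=> j hj; apply: contrapT => hn; apply: hall; by exists j.
rewrite (bigD1 k) // big1; last first.
  move=> j hj; rewrite mixP_set (_ : _ @^-1` _ = setT) ?probability_setT //.
  apply/seteqP; split => // -[] _ /=; first exact: hall'.
  by rewrite -hab //; exact: hall'.
rewrite /= mule1; congr (bernoulli_prob q _).
apply/seteqP; split => -[] /=.
- by move=> H; exact: H.
- by move=> H; exact: H.
- move=> H j; have [->|hj] := eqVneq j k; first exact: H.
  exact: hall'.
- move=> H j; have [->|hj] := eqVneq j k; first exact: H.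
  by rewrite -hab //; exact: hall'.
Qed.

Unset Implicit Arguments.
Set Strict Implicit.

Theorem theorem5 (R : realType) (m : nat) (hm : (0 < m)%N)
  (r : 'I_m -> R) (hr : forall j, 0 < r j) (eps : R) (heps : 0 < eps) :
  let rmax := \big[Num.max/0]_(j < m) r j in
  let c := 1 - eps + ln (1 + rmax ^+ 2) in
  exists mu sigma : 'I_m -> R,
    [/\ (forall j, 0 < mu j),
        (forall j, 0 <= sigma j),
        (forall j, sigma j / mu j = r j),
        (forall A : mechanism R m, truthful A ->
           exists (F : probability (m.-tuple R) R) (Fs : 'I_m -> probability R R),
             [/\ is_product F Fs,
                 (forall j, marginal_ok (mu j) (sigma j) (Fs j)) &
                 (c%:E <= eratio (OPT F) (REV A F))%E]) &
        (c%:E <= APX mu sigma)%E].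
Proof.
move=> rmax c.
pose k0 : 'I_m := Ordinal hm.
pose k := [arg max_(i > k0) r i]%O.
have hk : forall j, r j <= r k.
  rewrite /k; case: arg_maxP => //= i _ H j; exact: H.
set rho := r k.
have rho0 : 0 < rho := hr k.
have rmax0 : 0 <= rmax.
  apply: le_trans (ltW (hr k)) _; exact: le_bigmax.
have rmaxle : rmax <= rho.
  apply: bigmax_le => //; exact: ltW.
set L := ln (1 + rho^+2).
set cc := 1 - eps + L.
have c_le : c <= cc.
  rewrite /c /cc lerD2l ler_ln ?posrE; last 2 first.
  - by apply: ltr_pwDl => //; rewrite exprn_ge0.
  - by apply: ltr_pwDl => //; rewrite exprn_ge0 // ltW.
  by rewrite lerD2l; nra.
set M := Num.max cc 1.
have M1 : 1 <= M by rewrite le_max lexx orbT.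
have Mc : cc <= M by rewrite le_max lexx.
have M0 : 0 < M by lra.
have rho2 : 0 < 1 + rho^+2 by apply: ltr_pwDl => //; rewrite exprn_ge0 // ltW.
set D := eps / (4 * M * (1 + rho^+2)).
have D0 : 0 < D by rewrite divr_gt0 // !mulr_gt0.
have mR : 0 < m%:R :> R by rewrite ltr0n.
set dl := D / m%:R.
have dl0 : 0 < dl by rewrite divr_gt0.
set n := (Num.truncn (2 * rho^+4 / eps)).+1.
pose mu := fun j : 'I_m => if j == k then 1 else dl.
pose sigma := fun j : 'I_m => r j * mu j.
have mu0 : forall j, 0 < mu j by move=> j; rewrite /mu; case: ifP.
have main : forall A : mechanism R m, truthful A ->
  exists (F : probability (m.-tuple R) R) (Fs : 'I_m -> probability R R),
    [/\ is_product F Fs, (forall j, marginal_ok (mu j) (sigma j) (Fs j)),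
        in_class mu sigma F & (c%:E <= eratio (OPT F) (REV A F))%E].
  move=> A [hx hp hIC hIR hmeas].
  pose vec (s : R) : m.-tuple R := [tuple (if j == k then s else dl) | j < m].
  have tv : forall s j, tnth (vec s) j = if j == k then s else dl.
    by move=> s j; rewrite tnth_mktuple.
  have nvec : forall s, 0 <= s -> nonneg_vec (vec s).
    by move=> s s0 j; rewrite tv; case: ifP => // _; exact: ltW.
  have Esum : forall s, 0 <= s ->
      alloc A (vec s) k * s <= utility A (vec s) (vec s) + pay A (vec s) <=
      alloc A (vec s) k * s + D.
    move=> s s0; rewrite /utility subrK (sum_vec _ (tv s)).
    have hx' := hx _ (nvec s s0).
    apply/andP; split.
      rewrite lerDl; apply: sumr_ge0 => j _; apply: mulr_ge0; last exact: ltW.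
      by case/andP: (hx' j).
    rewrite lerD2l; apply: le_trans (_ : \sum_(j < m) dl <= _).
      rewrite big_mkcond; apply: ler_sum => j _; case: ifP => _; last exact: ltW.
      by apply: ler_piMl; [exact: ltW | case/andP: (hx' j)].
    by rewrite sumr_const card_ord -mulr_natr /dl mulfVK // gt_eqF.
  have ICv : forall s s', 0 <= s -> 0 <= s' ->
      utility A (vec s) (vec s) + alloc A (vec s) k * (s' - s) <=
      utility A (vec s') (vec s').
    move=> s s' s0 s'0; have := hIC _ _ (nvec s' s'0) (nvec s s0).
    rewrite /utility (sum_vec _ (tv s')) (sum_vec _ (tv s)) (sum_vec _ (tv s')).
    move=> H; apply: le_trans H; rewrite -subr_ge0.
    set z := (X in 0 <= X); have -> : z = 0 by rewrite /z; ring.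
    by [].
  have P0 : forall s, 0 <= s -> 0 <= pay A (vec s) by move=> s s0; apply: hp; exact: nvec.
  have [t [t1 [tH hct]]] : exists t, 1 <= t /\ t <= 1 + rho^+2 /\
      c * (pay A (vec t) / t + D) <= 1.
    have yge0 : forall t, 1 <= t -> 0 <= pay A (vec t) / t + D.
      move=> t t1; apply: addr_ge0; last exact: ltW.
      by apply: divr_ge0; [apply: P0|]; lra.
    case: (lerP cc 0) => hcc.
      exists 1; split => //; split; first by rewrite lerDl exprn_ge0 // ltW.
      have := yge0 1 (lexx _); nra.
    have n0 : (0 < n)%N by [].
    have hD : 2 * cc * D * (1 + rho^+2) <= eps / 2.
      rewrite /D; have -> : 2 * cc * (eps / (4 * M * (1 + rho ^+ 2))) * (1 + rho ^+ 2)
         = (cc / M) * (eps / 2) by field; rewrite !gt_eqF.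
      apply: ler_piMl; first by rewrite divr_ge0 // ltW.
      by rewrite ler_pdivrMr // mul1r.
    have hn : rho^+4 / n%:R <= eps / 2.
      have := truncnS_gt (2 * rho^+4 / eps); rewrite -/n => hn.
      rewrite ler_pdivrMr ?ltr0n //.
      have : 2 * rho ^+ 4 <= n%:R * eps.
        by rewrite -ler_pdivrMr // ltW.
      lra.
    have := @core R (fun s => utility A (vec s) (vec s)) (fun s => pay A (vec s))
      (fun s => alloc A (vec s) k) D cc rho eps n rho0 heps hcc (ltW D0) n0 hD hn (lexx _).
    case.
    - move=> s s' s0 s'0; exact: ICv.
    - by move=> s s0; apply: hIR; exact: nvec.
    - by move=> s s0; have := Esum s s0; lra.
    - move=> s s0; have := Esum s s0.
      have := hx _ (nvec s s0) k; case/andP => _ x1.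
      have : alloc A (vec s) k * s <= s by rewrite ler_piMl.
      lra.
    move=> i [hi hP].
    set t := 1 + i%:R * (rho^+2 / n%:R) in hP.
    have ti : 0 <= i%:R * (rho^+2 / n%:R).
      by rewrite mulr_ge0 // divr_ge0 // exprn_ge0 // ltW.
    exists t; split; first by rewrite /t lerDl.
    split.
      rewrite /t lerD2l; apply: le_trans (_ : n%:R * (rho^+2 / n%:R) <= _).
        by apply: ler_wpM2r; [rewrite divr_ge0 // exprn_ge0 // ltW | rewrite ler_nat].
      by rewrite mulrC mulfVK // gt_eqF // ltr0n.
    have t0 : 0 < t by rewrite /t; lra.
    have y0 := yge0 t ltac:(rewrite /t; lra).
    apply: le_trans (_ : cc * (pay A (vec t) / t + D) <= 1).
      by apply: ler_wpM2r.
    have : pay A (vec t) / t <= cc^-1 - D by rewrite ler_pdivrMr.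
    move=> h; have : pay A (vec t) / t + D <= cc^-1 by lra.
    move=> h2; apply: le_trans (_ : cc * cc^-1 <= 1).
      by rewrite ler_pM2l.
    by rewrite mulfV ?gt_eqF.
  have t0 : 0 < t by lra.
  set q := t^-1.
  have q01 : 0 <= q <= 1.
    by rewrite invr_ge0 ltW //= invf_le1.
  have q1 : q * t = 1 by rewrite mulVf // gt_eqF.
  set a := vec t; set b := vec 0.
  have mean : forall j, q * tnth a j + (1 - q) * tnth b j = mu j.
    move=> j; rewrite !tv /mu; case: ifP => _; first by rewrite q1 mulr0 addr0.
    ring.
  have var : forall j, q * (tnth a j - mu j)^+2 + (1 - q) * (tnth b j - mu j)^+2
      <= sigma j ^+ 2.
    move=> j; rewrite /sigma !tv /mu; case: ifP => [/eqP ->|_].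
      have -> : q * (t - 1) ^+ 2 + (1 - q) * (0 - 1) ^+ 2 = t - 1.
        by rewrite /q; field; rewrite gt_eqF.
      rewrite mulr1 -/rho; lra.
    by rewrite subrr expr0n /= !mulr0 addr0 exprn_ge0 // mulr_ge0 // ltW.
  have anng : forall j, 0 <= tnth a j by move=> j; rewrite tv; case: ifP => _; lra.
  have bnng : forall j, 0 <= tnth b j by move=> j; rewrite tv; case: ifP => _; lra.
  exists (mixP q a b), (fun j => mixP q (tnth a j) (tnth b j)); split.
  - by apply: (@mix_product _ _ k) => j hj; rewrite !tv (negPf hj).
  - move=> j; split.
    + rewrite mixP_set (_ : _ @^-1` _ = setT) ?probability_setT //.
      by apply/seteqP; split => // -[] _ /=.
    + by rewrite (int_mixP _ _ q01 (h := fun x : R => x)) ?mean //; exact: measurable_id.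
    + rewrite (int_mixP _ _ q01 (h := fun x : R => (x - mu j)^+2)) ?lee_fin ?var //.
      by apply: measurable_funX; apply: measurable_funB => //; exact: measurable_cst.
  - split.
      rewrite mixP_set (_ : _ @^-1` _ = setT) ?probability_setT //.
      by apply/seteqP; split => // -[] _ /=.
    move=> j; split.
      by rewrite (int_mixP _ _ q01 (h := fun v : m.-tuple R => tnth v j)) ?mean //; exact: measurable_tnth.
    rewrite (int_mixP _ _ q01 (h := fun v : m.-tuple R => (tnth v j - mu j)^+2)) ?lee_fin ?var //.
    apply: measurable_funX; apply: measurable_funB; first exact: measurable_tnth.
    exact: measurable_cst.
  have REVE : REV A (mixP q a b) = (q * pay A a + (1 - q) * pay A b)%:E.
    by rewrite /REV int_mixP.
  have OPT1 : (1%:E <= OPT (mixP q a b))%E.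
    have hB := posted_truthful k (ltW t0).
    apply: le_trans (_ : REV (posted k t) (mixP q a b) <= _)%E; last first.
      by apply: ereal_sup_ubound; exists (posted k t).
    rewrite /REV int_mixP //; last by case: hB.
    rewrite /pay /= !tv eqxx lexx.
    have -> : (t <= 0) = false by apply/negbTE; rewrite -ltNge; lra.
    by rewrite mulr0 addr0 q1.
  have Pb0 : 0 <= pay A b by apply: P0.
  have PbD : pay A b <= D.
    have := Esum 0 (lexx _); have := hIR _ (nvec 0 (lexx _)).
    rewrite mulr0 add0r /b; lra.
  have Pa0 : 0 <= pay A a by apply: P0; lra.
  set REVr := q * pay A a + (1 - q) * pay A b in REVE.
  have REV0 : 0 <= REVr.
    have [qa qb] := andP q01.
    have q1' : 0 <= 1 - q by rewrite subr_ge0.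
    by rewrite /REVr addr_ge0 // mulr_ge0.
  have REVle : REVr <= pay A a / t + D.
    rewrite /REVr mulrC lerD2l.
    apply: le_trans PbD; apply: ler_piMl => //; case/andP: q01 => ? ?; lra.
  have cR : c * REVr <= 1.
    case: (lerP c 0) => hc0; first by nra.
    by apply: le_trans hct; apply: ler_wpM2l; [exact: ltW|].
  rewrite REVE /eratio; case: ifP => [_|/eqP hne]; first exact: leey.
  have REVp : 0 < REVr by rewrite lt_neqAle REV0 andbT eq_sym; apply/eqP => h; apply: hne; rewrite h.
  rewrite /=.
  apply: le_trans (_ : (REVr^-1)%:E <= _)%E.
    by rewrite lee_fin -[REVr^-1]mul1r ler_pdivlMr.
  rewrite -{1}[(REVr^-1)%:E]mul1e; apply: lee_wpmul2r => //.
  by rewrite lee_fin invr_ge0.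
exists mu, sigma; split.
- exact: mu0.
- by move=> j; rewrite mulr_ge0 // ltW.
- by move=> j; rewrite /sigma mulfK // gt_eqF.
- by move=> A hA; have [F [Fs [h1 h2 _ h4]]] := main A hA; exists F, Fs.
- apply/ereal_infP => _ [A hA <-].
  have [F [Fs [_ _ h3 h4]]] := main A hA.
  apply: le_trans h4 _; apply: ereal_sup_ubound; by exists F.

Qed.
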